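(* Let $(\mathcal V,\mathcal W,\lambda)$ be a FTvN system with center $C$. Then: (a) For every $x\in\mathcal V$, $C(x)$ is a closed convex cone, and $[x]\cap C(x)=\{x\}$. (b) If $\lambda(x)=-\lambda(y)$ for some $x,y\in\mathcal V$, then $x=-y$ and $x,y\in C$. (c) $C$ is a closed linear subspace of $\mathcal V$ and $\lambda$ is linear on $C$. (d) $C=\{x\in\mathcal V:\lambda(-x)=-\lambda(x)\}$. (e) If $x$ and $-x$ commute, then $x\in C$. Consequently $C=\{x\in\mathcal V: x \text{ and } -x \text{ commute}\}$.
   Context: A Fan-Theobald-von Neumann (FTvN) system is a triple $(\mathcal V,\mathcal W,\lambda)$ where $\mathcal V,\mathcal W$ are real inner product spaces and $\lambda:\mathcal V\to\mathcal W$ is a map such that: (A1) $\|\lambda(x)\|=\|x\|$ for all $x$; (A2) $\langle x,y\rangle\le\langle\lambda(x),\lambda(y)\rangle$ for all $x,y$; (A3) for every $c\in\mathcal V$ and $q\in\lambda(\mathcal V)$ there exists $x$ with $\lambda(x)=q$ and $\langle c,x\rangle=\langle\lambda(c),\lambda(x)\rangle$. The $\lambda$-orbit of $u$ is $[u]=\{x:\lambda(x)=\lambda(u)\}$. Elements $x,y$ commute if $\langle x,y\rangle=\langle\lambda(x),\lambda(y)\rangle$. For $x\in\mathcal V$, $C(x)=\{y\in\mathcal V: y \text{ commutes with } x\}$, and the center of the system is $C=\bigcap_{x\in\mathcal V}C(x)$. *)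

(* Defs.v *)
From HB Require Import structures.
From mathcomp Require Import all_boot all_order all_algebra.
From mathcomp Require Import reals.
Set Implicit Arguments. Unset Strict Implicit. Unset Printing Implicit Defensive.
Import Order.TTheory GRing.Theory Num.Theory.
Local Open Scope ring_scope.

Section FTvN.
Variable R : realType.

Definition is_inner_product (V : lmodType R) (ip : V -> V -> R) : Prop :=
  [/\ (forall x y, ip x y = ip y x),
      (forall (a : R) x y z, ip (a *: x + y) z = a * ip x z + ip y z),
      (forall x, 0 <= ip x x) &
      (forall x, ip x x = 0 -> x = 0)].

Definition ipnorm (V : lmodType R) (ip : V -> V -> R) (x : V) : R :=
  Num.sqrt (ip x x).

Variables (V W : lmodType R) (ipV : V -> V -> R) (ipW : W -> W -> R)
  (lam : V -> W).

Definition FTvN_system : Prop :=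
  [/\ (forall x, ipnorm ipW (lam x) = ipnorm ipV x),
      (forall x y, ipV x y <= ipW (lam x) (lam y)) &
      (forall (c : V) (q : W), (exists v, lam v = q) ->
         exists x, lam x = q /\ ipV c x = ipW (lam c) (lam x))].

Definition lam_orbit (u : V) : V -> Prop := fun x => lam x = lam u.

Definition lam_commute (x y : V) : Prop := ipV x y = ipW (lam x) (lam y).

Definition commutant (x : V) : V -> Prop := fun y => lam_commute y x.

Definition center : V -> Prop := fun y => forall x, commutant x y.

Definition closed_set (S : V -> Prop) : Prop :=
  forall x, ~ S x -> exists e : R, 0 < e /\
     forall y, ipnorm ipV (y - x) < e -> ~ S y.

Definition convex_set (S : V -> Prop) : Prop :=
  forall x y (t : R), S x -> S y -> 0 <= t <= 1 -> S (t *: x + (1 - t) *: y).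

Definition cone (S : V -> Prop) : Prop :=
  forall (t : R) x, 0 <= t -> S x -> S (t *: x).

Definition convex_cone (S : V -> Prop) : Prop := convex_set S /\ cone S.

Definition linear_subspace (S : V -> Prop) : Prop :=
  [/\ S 0, (forall x y, S x -> S y -> S (x + y)) &
      (forall (a : R) x, S x -> S (a *: x))].

Definition linear_on (S : V -> Prop) : Prop :=
  forall (a b : R) x y, S x -> S y -> lam (a *: x + b *: y) = a *: lam x + b *: lam y.

End FTvN.

(* Main.v *)
Require Import Defs.
From HB Require Import structures.
From mathcomp Require Import all_boot all_order all_algebra.
From mathcomp Require Import reals.
From mathcomp Require Import lra.
From Stdlib Require Import Classical.
Import Order.TTheory GRing.Theory Num.Theory.
Local Open Scope ring_scope.
Set Implicit Arguments.

Lemma ip0l (R : realType) (V : lmodType R) (ip : V -> V -> R)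
  (h : is_inner_product ip) z : ip 0 z = 0.
Proof.
case: h => _ hl _ _; have := hl 1 0 0 z; rewrite scale1r addr0 mul1r.
move=> H; lra.
Qed.

Lemma ipDl (R : realType) (V : lmodType R) (ip : V -> V -> R)
  (h : is_inner_product ip) x y z : ip (x + y) z = ip x z + ip y z.
Proof. case: h => _ hl _ _. have := hl 1 x y z. rewrite scale1r mul1r. done. Qed.

Lemma ipZl (R : realType) (V : lmodType R) (ip : V -> V -> R)
  (h : is_inner_product ip) a x z : ip (a *: x) z = a * ip x z.
Proof. by have := ip0l h z; case: h => _ hl _ _ h0; rewrite -[a *: x]addr0 hl h0 addr0. Qed.

Lemma ipNl (R : realType) (V : lmodType R) (ip : V -> V -> R)
  (h : is_inner_product ip) x z : ip (- x) z = - ip x z.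
Proof. by rewrite -scaleN1r (ipZl h) mulN1r. Qed.

Lemma ipBl (R : realType) (V : lmodType R) (ip : V -> V -> R)
  (h : is_inner_product ip) x y z : ip (x - y) z = ip x z - ip y z.
Proof. by rewrite (ipDl h) (ipNl h). Qed.

Lemma ipC (R : realType) (V : lmodType R) (ip : V -> V -> R)
  (h : is_inner_product ip) x z : ip x z = ip z x.
Proof. by case: h. Qed.

Lemma ip0r (R : realType) (V : lmodType R) (ip : V -> V -> R)
  (h : is_inner_product ip) z : ip z 0 = 0.
Proof. by rewrite (ipC h) (ip0l h). Qed.

Lemma ipDr (R : realType) (V : lmodType R) (ip : V -> V -> R)
  (h : is_inner_product ip) x y z : ip z (x + y) = ip z x + ip z y.
Proof. by rewrite !(ipC h z) (ipDl h). Qed.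

Lemma ipZr (R : realType) (V : lmodType R) (ip : V -> V -> R)
  (h : is_inner_product ip) a x z : ip z (a *: x) = a * ip z x.
Proof. by rewrite !(ipC h z) (ipZl h). Qed.

Lemma ipNr (R : realType) (V : lmodType R) (ip : V -> V -> R)
  (h : is_inner_product ip) x z : ip z (- x) = - ip z x.
Proof. by rewrite !(ipC h z) (ipNl h). Qed.

Lemma ipBr (R : realType) (V : lmodType R) (ip : V -> V -> R)
  (h : is_inner_product ip) x y z : ip z (x - y) = ip z x - ip z y.
Proof. by rewrite !(ipC h z) (ipBl h). Qed.

Lemma ipge0 (R : realType) (V : lmodType R) (ip : V -> V -> R)
  (h : is_inner_product ip) x : 0 <= ip x x.
Proof. by case: h. Qed.

Lemma ipeq0 (R : realType) (V : lmodType R) (ip : V -> V -> R)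
  (h : is_inner_product ip) x : ip x x <= 0 -> x = 0.
Proof.
move=> hx; case: h (ipge0 h x) => _ _ _ hd h0; apply: hd.
by apply/eqP; rewrite eq_le hx h0.
Qed.

Lemma young (R : realType) (V : lmodType R) (ip : V -> V -> R)
  (h : is_inner_product ip) (s : R) a b :
  2 * s * ip a b <= s ^+ 2 * ip a a + ip b b.
Proof.
have := ipge0 h (s *: a - b).
rewrite (ipBl h) !(ipBr h) !(ipZl h) !(ipZr h) (ipC h b a).
move=> H; rewrite expr2; lra.
Qed.
Unset Implicit Arguments.

Theorem proposition6p2 (R : realType) (V W : lmodType R)
  (ipV : V -> V -> R) (ipW : W -> W -> R) (lam : V -> W)
  (hV : is_inner_product ipV) (hW : is_inner_product ipW)
  (hF : FTvN_system ipV ipW lam) :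
  [/\ (* (a) *)
      (forall x : V, closed_set ipV (commutant ipV ipW lam x) /\
                     convex_cone (commutant ipV ipW lam x) /\
                     (forall y, (lam_orbit lam x y /\ commutant ipV ipW lam x y) <-> y = x)),
      (* (b) *)
      (forall x y : V, lam x = - lam y ->
         [/\ x = - y, center ipV ipW lam x & center ipV ipW lam y]),
      (* (c) *)
      [/\ linear_subspace (center ipV ipW lam),
          closed_set ipV (center ipV ipW lam) &
          linear_on lam (center ipV ipW lam)],
      (* (d) *)
      (forall x : V, center ipV ipW lam x <-> lam (- x) = - lam x) &
      (* (e) *)
      ((forall x : V, lam_commute ipV ipW lam x (- x) -> center ipV ipW lam x) /\
       (forall x : V, center ipV ipW lam x <-> lam_commute ipV ipW lam x (- x)))].
Proof.
case: hF => A1 A2 A3.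
rewrite /center /commutant /lam_commute /lam_orbit.
have N x : ipW (lam x) (lam x) = ipV x x.
  by rewrite -(sqr_sqrtr (ipge0 hW _)) -(sqr_sqrtr (ipge0 hV x)); have := A1 x; rewrite /ipnorm => ->.
have Hom t x : 0 <= t -> lam (t *: x) = t *: lam x.
  move=> t0; apply/eqP; rewrite -subr_eq0; apply/eqP; apply: (ipeq0 hW).
  rewrite (ipBl hW) !(ipBr hW) !(ipZl hW) !(ipZr hW) !N (ipC hW (lam x)).
  have := A2 (t *: x) x; rewrite (ipZl hV) => H.
  have H2 : t * (t * ipV x x) <= t * ipW (lam (t *: x)) (lam x) by rewrite ler_wpM2l.
  rewrite (ipZl hV) (ipZr hV); lra.
have Add x y z : ipV y x = ipW (lam y) (lam x) -> ipV z x = ipW (lam z) (lam x) ->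
    ipV (y + z) x = ipW (lam (y + z)) (lam x).
  move=> Hy Hz; have [w [Hw1 Hw2]] := A3 (y + z) (lam x) (ex_intro _ x erefl).
  apply/eqP; rewrite eq_le A2 /=.
  rewrite -Hw1 -Hw2 (ipDl hV) (ipDl hV) Hy Hz -Hw1.
  by apply: lerD; apply: A2.
have Cone x y t : 0 <= t -> ipV y x = ipW (lam y) (lam x) -> ipV (t *: y) x = ipW (lam (t *: y)) (lam x).
  by move=> t0 Hy; rewrite Hom // (ipZl hV) (ipZl hW) Hy.
have Clo x : closed_set ipV (fun y => ipV y x = ipW (lam y) (lam x)).
  move=> y0 Hy0.
  have [w [Hw1 Hw2]] := A3 y0 (lam x) (ex_intro _ x erefl).
  set d := ipW (lam y0) (lam x) - ipV y0 x.
  have d0 : 0 < d.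
    rewrite /d subr_gt0 lt_neqAle A2 andbT; apply/eqP => E; exact: Hy0.
  set B := ipV (x - w) (x - w).
  have B0 : 0 <= B by apply: ipge0.
  exists (d / (B + 1)); split; first by apply: divr_gt0 => //; lra.
  move=> y; rewrite /ipnorm => Hn Hy.
  set a := y - y0.
  have s0 : 0 < (B + 1) / d by apply: divr_gt0 => //; lra.
  set s := (B + 1) / d.
  have Y := young hV s a (x - w).
  have Hab : d <= ipV a (x - w).
    rewrite /a (ipBl hV) !(ipBr hV) Hw2 Hw1 Hy /d.
    have := A2 y w; rewrite Hw1; lra.
  have Haa : ipV a a < (d / (B + 1)) ^+ 2.
    rewrite -(sqr_sqrtr (ipge0 hV a)); rewrite ltr_pXn2r ?nnegrE ?sqrtr_ge0 //.
    apply: ltW; apply: divr_gt0 => //; lra.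
  have E1 : s * d = B + 1 by rewrite /s divfK // gt_eqF.
  have E2 : s ^+ 2 * (d / (B + 1)) ^+ 2 = 1.
    rewrite -exprMn /s mulrA divfK ?gt_eqF // divff ?expr1n //.
    by rewrite gt_eqF //; lra.
  have H1 : s * d <= s * ipV a (x - w) by rewrite ler_wpM2l // ltW.
  have H2 : s ^+ 2 * ipV a a < s ^+ 2 * (d / (B + 1)) ^+ 2 by rewrite ltr_pM2l // exprn_gt0.
  rewrite -mulrA in Y.
  move: Y H1 H2; rewrite E1 E2 -/B.
  set P := s * _; set Q := s ^+ 2 * _ => Y H1 H2; lra.
have Orb x y : (lam y = lam x /\ ipV y x = ipW (lam y) (lam x)) <-> y = x.
  split; last by move=> ->; rewrite N.
  case=> E H; apply/eqP; rewrite -subr_eq0; apply/eqP; apply: (ipeq0 hV).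
  rewrite (ipBl hV) !(ipBr hV) H (ipC hV x y) H -(N y) -(N x) E; lra.
have XY x y : lam x = - lam y -> x = - y.
  move=> E; apply/eqP; rewrite -addr_eq0; apply/eqP; apply: (ipeq0 hV).
  rewrite !(ipDl hV) !(ipDr hV) (ipC hV y x) -(N x) -(N y).
  rewrite E !(ipNl hW) !(ipNr hW) ?opprK; have := A2 x y; rewrite E (ipNl hW); lra.
have CB x y : lam x = - lam y -> forall z, ipV x z = ipW (lam x) (lam z).
  move=> E z; apply/eqP; rewrite eq_le A2 /=.
  have Ly : lam y = - lam x by rewrite E opprK.
  have Ey : y = - x by rewrite (XY _ _ E) opprK.
  have := A2 y z; rewrite Ly {1}Ey (ipNl hV) (ipNl hW); lra.
have NegC x : ipV x (- x) = ipW (lam x) (lam (- x)) -> lam (- x) = - lam x.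
  move=> H; apply/eqP; rewrite -addr_eq0; apply/eqP; apply: (ipeq0 hW).
  rewrite !(ipDl hW) !(ipDr hW) !N (ipC hW (lam (-x))) -H ?(ipNl hV) ?(ipNr hV); lra.
have D x : (forall z, ipV x z = ipW (lam x) (lam z)) <-> lam (- x) = - lam x.
  split; first by move=> H; apply: NegC; apply: H.
  by move=> E; apply: (CB x (- x)); rewrite E opprK.
have L0 : lam 0 = 0 by apply: (ipeq0 hW); rewrite N (ip0l hV).
have Sub : linear_subspace (fun y : V => forall x : V, ipV y x = ipW (lam y) (lam x)).
  split.
  - by apply/D; rewrite oppr0 L0 oppr0.
  - by move=> x y Hx Hy z; apply: Add.
  - move=> a x Hx z; case: (leP 0 a) => a0; first exact: Cone.
    rewrite -[a]opprK scaleNr -scalerN; apply: Cone; first lra.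
    by apply: (CB (-x) x); exact: (proj1 (D x) Hx).
split.
- move=> x; split; first exact: Clo.
  split; last exact: Orb.
  split.
  + move=> y z t Hy Hz /andP[t0 t1]; apply: Add; apply: Cone => //; lra.
  + by move=> t y t0 Hy; apply: Cone.
- move=> x y E; split; [exact: XY| exact: CB E | apply: (CB y x); by rewrite E opprK].
- split; first exact: Sub.
  + move=> x Hx.
    have [z Hz] := not_all_ex_not _ _ Hx.
    have [e [e0 He]] := Clo z x Hz.
    by exists e; split=> // y Hy Cy; apply: (He y Hy (Cy z)).
  + move=> a b x y Hx Hy.
    case: Sub => _ SD SZ.
    have Hu := SD _ _ (SZ a x Hx) (SZ b y Hy).
    set u := a *: x + b *: y in Hu *.
    pose d := lam u - (a *: lam x + b *: lam y).
    have K c : (forall z, ipV c z = ipW (lam c) (lam z)) -> ipW d (lam c) = 0.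
      move=> Hc; rewrite (ipC hW) /d (ipBr hW) (ipDr hW) !(ipZr hW) -!Hc.
      by rewrite /u (ipDr hV) !(ipZr hV) subrr.
    apply/eqP; rewrite -subr_eq0; apply/eqP; apply: (ipeq0 hW).
    rewrite -/d {2}/d (ipBr hW) (ipDr hW) !(ipZr hW) (K _ Hx) (K _ Hy) (K _ Hu).
    by rewrite !mulr0 addr0 subr0.
- exact: D.
- split.
  + by move=> x H; apply/D; apply: NegC.
  + move=> x; split; first by move=> H; apply: H.
    by move=> H; apply/D; apply: NegC.
Qed.
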